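(* For $\varepsilon\in(0,1/2)$, any quantum query algorithm that, given unitary oracles $U_\varphi,U_\psi$ preparing pure states $\ket{\varphi}=U_\varphi\ket{0}$ and $\ket{\psi}=U_\psi\ket{0}$ (with access to their inverses and controlled versions), estimates the trace distance $\mathrm{T}(\ket{\varphi},\ket{\psi})$ to within additive error $\varepsilon$ with probability at least $2/3$ (for all such inputs) has query complexity $\Omega(1/\varepsilon)$.
   Context: For pure states, $\mathrm{T}(\ket{\varphi},\ket{\psi})=\tfrac12\operatorname{tr}\bigl|\ket{\varphi}\bra{\varphi}-\ket{\psi}\bra{\psi}\bigr|=\sqrt{1-|\braket{\varphi}{\psi}|^2}$. Query complexity is the number of applications of the oracles, their inverses, or controlled versions in the algorithm's circuit. *)

(* Defs.v *)
From HB Require Import structures.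
From mathcomp Require Import all_boot all_order all_algebra.
From mathcomp Require Import reals.
From mathcomp Require Import complex mxtens.
Set Implicit Arguments. Unset Strict Implicit. Unset Printing Implicit Defensive.
Import Order.TTheory GRing.Theory Num.Theory.
Local Open Scope ring_scope.

Section QueryModel.
Variable R : rcfType.
Local Notation C := R[i].

Definition adjmx m n (A : 'M[C]_(m, n)) : 'M[C]_(n, m) := (map_mx (@conjc R) A)^T.

Definition unitary n (U : 'M[C]_n) : Prop := U *m adjmx U = 1%:M.

Definition ket0 n : 'cV[C]_n := \col_(i < n) (if val i == 0%N then 1 else 0).

Definition abs2 (z : C) : R := complex.Re z ^+ 2 + complex.Im z ^+ 2.

Definition inner_prod d (Uphi Upsi : 'M[C]_d) : C :=
  (adjmx (Uphi *m ket0 d) *m (Upsi *m ket0 d)) 0 0.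

Definition trace_dist_pure d (Uphi Upsi : 'M[C]_d) : R :=
  Num.sqrt (1 - abs2 (inner_prod Uphi Upsi)).

Inductive oracle_kind := Ophi | OphiInv | Opsi | OpsiInv.

Definition oracle_mx d (Uphi Upsi : 'M[C]_d) (o : oracle_kind) : 'M[C]_d :=
  match o with
  | Ophi => Uphi | OphiInv => adjmx Uphi
  | Opsi => Upsi | OpsiInv => adjmx Upsi
  end.

Definition proj2 (c : 'I_2) : 'M[C]_2 := delta_mx c c.

(* A query (c, o) acts on  C^2 (control) (x) C^d (system) (x) C^k (workspace).
   c = true : controlled-O  = |0><0| (x) I + |1><1| (x) O  on the first two factors;
   c = false: plain O on the system register (control qubit untouched). *)
Definition query_mx d k (Uphi Upsi : 'M[C]_d) (q : bool * oracle_kind)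
  : 'M[C]_(2 * d * k) :=
  let O := oracle_mx Uphi Upsi q.2 in
  (if q.1 then proj2 0 *t (1%:M : 'M[C]_d) + proj2 1 *t O
   else (1%:M : 'M[C]_2) *t O) *t (1%:M : 'M[C]_k).

Fixpoint run_state d k (Us : nat -> 'M[C]_(2 * d * k))
    (qs : nat -> bool * oracle_kind) (Uphi Upsi : 'M[C]_d) (t : nat)
    : 'cV[C]_(2 * d * k) :=
  match t with
  | 0 => Us 0%N *m ket0 _
  | t'.+1 => Us t *m (query_mx k Uphi Upsi (qs t') *m
                      run_state Us qs Uphi Upsi t')
  end.

(* Probability that the final computational-basis measurement, post-processed by
   f, yields an estimate within eps of the trace distance. *)
Definition success_prob d k (Us : nat -> 'M[C]_(2 * d * k))
    (qs : nat -> bool * oracle_kind) (f : 'I_(2 * d * k) -> R) (T : nat)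
    (eps : R) (Uphi Upsi : 'M[C]_d) : R :=
  \sum_(x < 2 * d * k | `|f x - trace_dist_pure Uphi Upsi| <= eps)
     abs2 (run_state Us qs Uphi Upsi T x 0).

End QueryModel.

(* Main.v *)
Require Import Defs.
From HB Require Import structures.
From mathcomp Require Import all_boot all_order all_algebra.
From mathcomp Require Import reals.
From mathcomp Require Import complex mxtens.
From mathcomp Require Import ring lra.
Set Implicit Arguments. Unset Strict Implicit. Unset Printing Implicit Defensive.
Import Order.TTheory GRing.Theory Num.Theory.
Local Open Scope ring_scope.

Section S.
Variable R : rcfType.
Local Notation C := R[i].

Lemma adjmxM m n p (A : 'M[C]_(m, n)) (B : 'M[C]_(n, p)) :
  adjmx (A *m B) = adjmx B *m adjmx A.
Proof. by rewrite /adjmx map_mxM trmx_mul. Qed.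

Lemma adjmxD m n (A B : 'M[C]_(m, n)) : adjmx (A + B) = adjmx A + adjmx B.
Proof. by apply/matrixP=> i j; rewrite !mxE rmorphD. Qed.

Lemma adjmxN m n (A : 'M[C]_(m, n)) : adjmx (- A) = - adjmx A.
Proof. by apply/matrixP=> i j; rewrite !mxE rmorphN. Qed.

Lemma adjmxB m n (A B : 'M[C]_(m, n)) : adjmx (A - B) = adjmx A - adjmx B.
Proof. by rewrite adjmxD adjmxN. Qed.

Lemma adjmxZ m n (c : C) (A : 'M[C]_(m, n)) : adjmx (c *: A) = (conjc c) *: adjmx A.
Proof. by apply/matrixP=> i j; rewrite !mxE rmorphM. Qed.

Lemma adjmx1 n : adjmx (1%:M : 'M[C]_n) = 1%:M.
Proof. by apply/matrixP=> i j; rewrite !mxE eq_sym rmorph_nat. Qed.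

Lemma adjmxK m n (A : 'M[C]_(m, n)) : adjmx (adjmx A) = A.
Proof. by apply/matrixP=> i j; rewrite !mxE conjcK. Qed.

Lemma adjmxT m n p q (A : 'M[C]_(m, n)) (B : 'M[C]_(p, q)) :
  adjmx (A *t B) = adjmx A *t adjmx B.
Proof. by apply/matrixP=> i j; rewrite /tensmx !mxE rmorphM. Qed.

Lemma tensmxDl m n p q (A B : 'M[C]_(m, n)) (D : 'M[C]_(p, q)) :
  (A + B) *t D = A *t D + B *t D.
Proof. by apply/matrixP=> i j; rewrite /tensmx !mxE mulrDl. Qed.

Lemma tensmxDr m n p q (A : 'M[C]_(m, n)) (B D : 'M[C]_(p, q)) :
  A *t (B + D) = A *t B + A *t D.
Proof. by apply/matrixP=> i j; rewrite /tensmx !mxE mulrDr. Qed.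

Lemma tensmxZl m n p q c (A : 'M[C]_(m, n)) (D : 'M[C]_(p, q)) :
  (c *: A) *t D = c *: (A *t D).
Proof. by apply/matrixP=> i j; rewrite /tensmx !mxE mulrA. Qed.

Lemma tensmxZr m n p q c (A : 'M[C]_(m, n)) (D : 'M[C]_(p, q)) :
  A *t (c *: D) = c *: (A *t D).
Proof. by apply/matrixP=> i j; rewrite /tensmx !mxE mulrCA. Qed.

Lemma tensmx11 m n : (1%:M : 'M[C]_m) *t (1%:M : 'M[C]_n) = 1%:M.
Proof.
apply/matrixP=> i j.
case: (mxtens_indexP i)=> i0 i1; case: (mxtens_indexP j)=> j0 j1.
rewrite tensmxE !mxE -natrM; congr (_%:R).
by rewrite -!val_eqE /= eq_addl_mul ?ltn_ord // xpair_eqE mulnb.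
Qed.

Definition nrm2 N (v : 'cV[C]_N) : R := complex.Re ((adjmx v *m v) 0 0).

Lemma nrm2E N (v : 'cV[C]_N) : nrm2 v = \sum_i abs2 (v i 0).
Proof.
rewrite /nrm2 mxE raddf_sum; apply: eq_bigr => i _.
rewrite !mxE /abs2; case: (v i 0) => x y; simpc => /=. ring.
Qed.

Lemma nrm2_ge0 N (v : 'cV[C]_N) : 0 <= nrm2 v.
Proof. by rewrite nrm2E; apply: sumr_ge0 => i _; rewrite /abs2 addr_ge0 ?sqr_ge0. Qed.

Definition rdot (z w : C) : R := complex.Re z * complex.Re w + complex.Im z * complex.Im w.
Definition redot N (u v : 'cV[C]_N) : R := \sum_i rdot (u i 0) (v i 0).

Lemma nrm2D N (u v : 'cV[C]_N) : nrm2 (u + v) = nrm2 u + nrm2 v + 2 * redot u v.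
Proof.
rewrite !nrm2E /redot mulr_sumr -!big_split /=; apply: eq_bigr => i _.
rewrite mxE; case: (u i 0) => a b; case: (v i 0) => c d.
rewrite /abs2 /rdot; simpc => /=; ring.
Qed.

Lemma nrm2N N (u : 'cV[C]_N) : nrm2 (- u) = nrm2 u.
Proof.
rewrite !nrm2E; apply: eq_bigr => i _.
rewrite mxE; case: (u i 0) => a b; rewrite /abs2; simpc => /=; ring.
Qed.

Lemma nrm2Z N t (u : 'cV[C]_N) : nrm2 ((t%:C)%C *: u) = t ^+ 2 * nrm2 u.
Proof.
rewrite !nrm2E mulr_sumr; apply: eq_bigr => i _.
rewrite mxE; case: (u i 0) => a b; rewrite /abs2; simpc => /=; ring.
Qed.

Lemma redotZ N t (u v : 'cV[C]_N) : redot u ((t%:C)%C *: v) = t * redot u v.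
Proof.
rewrite /redot mulr_sumr; apply: eq_bigr => i _.
rewrite mxE; case: (u i 0) => a b; case: (v i 0) => c d; rewrite /rdot; simpc => /=; ring.
Qed.

Lemma redotC N (u v : 'cV[C]_N) : redot u v = redot v u.
Proof. by apply: eq_bigr => i _; rewrite /rdot mulrC [complex.Im _ * _]mulrC. Qed.

Lemma discr (A B D : R) : 0 <= D -> (forall t, 0 <= A + 2 * t * B + t ^+ 2 * D) ->
  B ^+ 2 <= A * D.
Proof.
move=> hD h.
have hA : 0 <= A by have := h 0; rewrite !mulr0 mul0r expr0n /= mul0r !addr0.
have [D0|Dpos] := eqVneq D 0.
  have [B0|Bn0] := eqVneq B 0; first by rewrite B0 D0 expr0n /= mulr0.
  have := h (- (A + 1) / (2 * B)).
  have -> : A + 2 * (- (A + 1) / (2 * B)) * B = -1 by field; rewrite Bn0.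
  rewrite D0 mulr0 addr0; lra.
have hD' : 0 < D by rewrite lt_def Dpos hD.
have := h (- B / D).
have -> : A + 2 * (- B / D) * B + (- B / D) ^+ 2 * D = A - B ^+ 2 / D by field; rewrite Dpos.
rewrite subr_ge0 ler_pdivrMr //.
Qed.

Lemma CS N (u v : 'cV[C]_N) : redot u v ^+ 2 <= nrm2 u * nrm2 v.
Proof.
rewrite mulrC; apply: discr; first exact: nrm2_ge0.
move=> t; have := nrm2_ge0 (v + (t%:C)%C *: u).
rewrite nrm2D nrm2Z redotZ redotC => H; nra.
Qed.

Definition nrm N (u : 'cV[C]_N) : R := Num.sqrt (nrm2 u).

Lemma nrm_ge0 N (u : 'cV[C]_N) : 0 <= nrm u.
Proof. exact: sqrtr_ge0. Qed.

Lemma redot_le N (u v : 'cV[C]_N) : redot u v <= nrm u * nrm v.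
Proof.
apply: le_trans (ler_norm _) _.
rewrite -sqrtr_sqr /nrm -sqrtrM ?nrm2_ge0 // ler_wsqrtr //; exact: CS.
Qed.

Lemma nrmD N (u v : 'cV[C]_N) : nrm (u + v) <= nrm u + nrm v.
Proof.
rewrite {1}/nrm -(ger0_norm (addr_ge0 (nrm_ge0 u) (nrm_ge0 v))) -sqrtr_sqr.
rewrite ler_wsqrtr // nrm2D sqrrD /nrm !sqr_sqrtr ?nrm2_ge0 //.
have := redot_le u v; rewrite /nrm; lra.
Qed.

Lemma nrmN N (u : 'cV[C]_N) : nrm (- u) = nrm u.
Proof. by rewrite /nrm nrm2N. Qed.

Lemma nrmB N (u v : 'cV[C]_N) : nrm (u - v) <= nrm u + nrm v.
Proof. by rewrite -(nrmN v); apply: nrmD. Qed.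


Lemma redotE N (u v : 'cV[C]_N) : redot u v = complex.Re ((adjmx u *m v) 0 0).
Proof.
rewrite mxE raddf_sum; apply: eq_bigr => i _.
rewrite !mxE /rdot; case: (u i 0) => a b; case: (v i 0) => c d; simpc => /=; ring.
Qed.

Lemma nrm2_iso N (A : 'M[C]_N) (v : 'cV[C]_N) :
  adjmx A *m A = 1%:M -> nrm2 (A *m v) = nrm2 v.
Proof. by move=> H; rewrite /nrm2 adjmxM -mulmxA (mulmxA (adjmx A)) H mul1mx. Qed.

Lemma unitary_iso N (A : 'M[C]_N) : unitary A -> adjmx A *m A = 1%:M.
Proof. by move/mulmx1C. Qed.

Definition projector N (P : 'M[C]_N) := adjmx P = P /\ P *m P = P.

Lemma proj_contr N (P : 'M[C]_N) (x : 'cV[C]_N) : projector P -> nrm2 (P *m x) <= nrm2 x.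
Proof.
move=> [hA hP].
have -> : x = P *m x + (1%:M - P) *m x by rewrite mulmxBl mul1mx addrC subrK.
rewrite nrm2D mulmxDr mulmxA hP mulmxA mulmxBr hP mulmx1 subrr mul0mx addr0.
suff -> : redot (P *m x) ((1%:M - P) *m x) = 0.
  by rewrite mulr0 addr0 lerDl nrm2_ge0.
rewrite redotE adjmxM hA mulmxA -(mulmxA (adjmx x)) mulmxBr hP mulmx1 subrr mulmx0 mul0mx.
by rewrite mxE.
Qed.

Lemma nrm2_scaled N (D P : 'M[C]_N) (g : R) (x : 'cV[C]_N) :
  projector P -> 0 <= g -> adjmx D *m D = (g%:C)%C *: P -> nrm2 (D *m x) <= g * nrm2 x.
Proof.
move=> hP hg hD.
have -> : nrm2 (D *m x) = g * nrm2 (P *m x).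
  rewrite /nrm2 adjmxM -mulmxA (mulmxA (adjmx D)) hD.
  case: hP => hA hPP; rewrite adjmxM hA -mulmxA (mulmxA P) hPP.
  rewrite -scalemxAl -scalemxAr mxE; case: ((adjmx x *m (P *m x)) 0 0) => a b; simpc => /=; ring.
by apply: ler_wpM2l => //; apply: proj_contr.
Qed.

Lemma nrm_scaled N (D P : 'M[C]_N) (g : R) (x : 'cV[C]_N) :
  projector P -> 0 <= g -> adjmx D *m D = (g%:C)%C *: P -> nrm (D *m x) <= Num.sqrt g * nrm x.
Proof.
move=> hP hg hD; rewrite /nrm -sqrtrM // ler_wsqrtr //; exact: nrm2_scaled hD.
Qed.

Lemma nrm_iso N (A : 'M[C]_N) (v : 'cV[C]_N) :
  adjmx A *m A = 1%:M -> nrm (A *m v) = nrm v.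
Proof. by move=> H; rewrite /nrm nrm2_iso. Qed.

Definition mask N (P : pred 'I_N) (v : 'cV[C]_N) : 'cV[C]_N :=
  \col_i (if P i then v i 0 else 0).

Lemma nrm2_mask N (P : pred 'I_N) (v : 'cV[C]_N) :
  nrm2 (mask P v) = \sum_(i | P i) abs2 (v i 0).
Proof.
rewrite nrm2E [RHS]big_mkcond /=; apply: eq_bigr => i _; rewrite mxE.
by case: (P i) => //; rewrite /abs2 /= expr0n /= addr0.
Qed.

Lemma maskB N (P : pred 'I_N) (u v : 'cV[C]_N) : mask P (u - v) = mask P u - mask P v.
Proof. by apply/matrixP => i j; rewrite !mxE; case: (P i); rewrite ?subr0. Qed.

Lemma nrm2_mask_le N (P : pred 'I_N) (v : 'cV[C]_N) : nrm2 (mask P v) <= nrm2 v.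
Proof.
rewrite nrm2E nrm2E; apply: ler_sum => i _; rewrite mxE.
case: (P i) => //; rewrite /abs2 /= expr0n /= addr0 addr_ge0 ?sqr_ge0 //.
Qed.

Lemma nrm_mask_le N (P : pred 'I_N) (v : 'cV[C]_N) : nrm (mask P v) <= nrm v.
Proof. by rewrite /nrm ler_wsqrtr // nrm2_mask_le. Qed.


Lemma tensmxBl m n p q (A B : 'M[C]_(m, n)) (D : 'M[C]_(p, q)) :
  (A - B) *t D = A *t D - B *t D.
Proof. by apply/matrixP=> i j; rewrite /tensmx !mxE mulrBl. Qed.

Lemma tensmxBr m n p q (A : 'M[C]_(m, n)) (B D : 'M[C]_(p, q)) :
  A *t (B - D) = A *t B - A *t D.
Proof. by apply/matrixP=> i j; rewrite /tensmx !mxE mulrBr. Qed.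

Definition Pc (c : bool) : 'M[C]_2 := if c then proj2 R 1 else 1%:M.

Lemma proj2_sum : proj2 R 0 + proj2 R 1 = 1%:M.
Proof.
apply/matrixP=> i j; rewrite !mxE.
case: i => [[|[|i]] Hi] //; case: j => [[|[|j]] Hj] //=; rewrite ?addr0 ?add0r //.
Qed.

Lemma Pc_proj c : projector (Pc c).
Proof.
case: c; rewrite /Pc /projector.
  split; last by rewrite /proj2 mul_delta_mx.
  by apply/matrixP=> i j; rewrite !mxE andbC rmorph_nat.
by rewrite adjmx1 mulmx1.
Qed.

Lemma query_dec d k (Uphi Upsi : 'M[C]_d) q :
  query_mx k Uphi Upsi q =
  1%:M + (Pc q.1 *t (oracle_mx Uphi Upsi q.2 - 1%:M)) *t (1%:M : 'M[C]_k).
Proof.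
case: q => [[] o]; rewrite /query_mx /Pc /=.
  have -> : proj2 R 0 = 1%:M - proj2 R 1 by rewrite -proj2_sum addrK.
  rewrite tensmxBl tensmx11 tensmxBr tensmxDl tensmxBl !tensmx11.
  by rewrite tensmxBl addrA addrAC.
by rewrite tensmxBr tensmx11 tensmxBl tensmx11 addrC subrK.
Qed.

Lemma proj_tens d k (P : 'M[C]_2) : projector P ->
  projector ((P *t (1%:M : 'M[C]_d)) *t (1%:M : 'M[C]_k)).
Proof.
move=> [hA hP]; split; first by rewrite !adjmxT hA !adjmx1.
by rewrite !tensmx_mul hP !mulmx1.
Qed.

Lemma D_sq d k (P : 'M[C]_2) (E : 'M[C]_d) : projector P ->
  adjmx ((P *t E) *t (1%:M : 'M[C]_k)) *m ((P *t E) *t (1%:M : 'M[C]_k))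
  = (P *t (adjmx E *m E)) *t 1%:M.
Proof. by move=> [hA hP]; rewrite !adjmxT hA adjmx1 !tensmx_mul hP mulmx1. Qed.

Lemma query_unit d k (P : 'M[C]_2) (E : 'M[C]_d) : projector P ->
  E + adjmx E + adjmx E *m E = 0 ->
  adjmx (1%:M + (P *t E) *t (1%:M : 'M[C]_k)) *m (1%:M + (P *t E) *t (1%:M : 'M[C]_k)) = 1%:M.
Proof.
move=> hP hE.
have H0 : (P *t E) *t (1%:M : 'M[C]_k) + adjmx ((P *t E) *t (1%:M : 'M[C]_k)) +
   adjmx ((P *t E) *t (1%:M : 'M[C]_k)) *m ((P *t E) *t (1%:M : 'M[C]_k)) = 0.
  rewrite D_sq //; case: hP => hA _.
  by rewrite !adjmxT hA adjmx1 -!tensmxDl -!tensmxDr hE tensmx0 tens0mx.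
move: H0; rewrite adjmxD adjmx1 mulmxDl mulmxDr !mul1mx mulmxDr mulmx1.
move=> H; by rewrite -addrA (addrA (P *t E *t 1%:M)) H addr0.
Qed.

Lemma query_nrm d k (P : 'M[C]_2) (E : 'M[C]_d) (g : R) (x : 'cV[C]_(2 * d * k)) :
  projector P -> 0 <= g -> adjmx E *m E = (g%:C)%C *: 1%:M ->
  nrm (((P *t E) *t (1%:M : 'M[C]_k)) *m x) <= Num.sqrt g * nrm x.
Proof.
move=> hP hg hE.
apply: (nrm_scaled (P := (P *t (1%:M : 'M[C]_d)) *t (1%:M : 'M[C]_k))); [exact: proj_tens | done | ].
by rewrite D_sq // hE tensmxZr tensmxZl.
Qed.

Lemma E_unit d (O : 'M[C]_d) : adjmx O *m O = 1%:M ->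
  (O - 1%:M) + adjmx (O - 1%:M) + adjmx (O - 1%:M) *m (O - 1%:M) = 0.
Proof.
move=> H; rewrite adjmxB adjmx1 mulmxBl !mulmxBr H !mulmx1 mul1mx.
move: (adjmx O) => Y; apply/matrixP=> i j; rewrite !mxE; ring.
Qed.

Lemma E_sq d (O : 'M[C]_d) : adjmx O *m O = 1%:M ->
  adjmx (O - 1%:M) *m (O - 1%:M) = 1%:M + 1%:M - (O + adjmx O).
Proof.
move=> H; rewrite adjmxB adjmx1 mulmxBl !mulmxBr H !mulmx1 mul1mx.
move: (adjmx O) => Y; apply/matrixP=> i j; rewrite !mxE; ring.
Qed.


Definition svec d : 'cV[C]_d := \col_i (if (val i <= 1)%N then 1 else 0).
Definition Kmx d : 'M[C]_d := 1%:M - svec d *m adjmx (svec d).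
Definition Wmx d (a b : R) : 'M[C]_d := (a%:C)%C *: 1%:M + (Complex 0 b) *: Kmx d.

Lemma ss d : (1 < d)%N -> adjmx (svec d) *m svec d = (2 : C)%:M.
Proof.
case: d => [|[|d]] // _; apply/matrixP=> i j; rewrite !ord1 !mxE.
rewrite 2!big_ord_recl big1 /=.
  have h : (1 -i* 0)%C = 1 :> C by rewrite oppr0.
  by rewrite !mxE /= h mulr1n !mulr1 addr0; ring.
move=> l _; rewrite !mxE.
have -> : (\val (lift ord0 (lift ord0 l)) <= 1)%N = false.
  by apply/negbTE; rewrite -ltnNge; change (1 < lift ord0 (lift ord0 l))%N; rewrite !lift0.
by rewrite mulr0.
Qed.

Lemma K_adj d : adjmx (Kmx d) = Kmx d.
Proof. by rewrite /Kmx adjmxB adjmx1 adjmxM adjmxK. Qed.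

Lemma K_sq d : (1 < d)%N -> Kmx d *m Kmx d = 1%:M.
Proof.
move=> hd; rewrite /Kmx mulmxBl mul1mx mulmxBr mulmx1 -mulmxA (mulmxA (adjmx _)) ss //.
rewrite mul_scalar_mx -scalemxAr.
move: (svec d *m adjmx (svec d)) => S; apply/matrixP=> i j; rewrite !mxE; ring.
Qed.

Lemma K00 d (i0 : 'I_d) : val i0 = 0%N -> Kmx d i0 i0 = 0.
Proof.
move=> h0; rewrite /Kmx !mxE big_ord1 !mxE h0 /= eqxx.
have h : (1 -i* 0)%C = 1 :> C by rewrite oppr0.
by rewrite h mulr1 subrr.
Qed.

Lemma W_adj d a b : adjmx (Wmx d a b) = (a%:C)%C *: 1%:M + (Complex 0 (- b)) *: Kmx d.
Proof. by rewrite /Wmx adjmxD !adjmxZ adjmx1 K_adj conjc_real. Qed.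

Lemma W_unit d a b : (1 < d)%N -> a ^+ 2 + b ^+ 2 = 1 ->
  adjmx (Wmx d a b) *m Wmx d a b = 1%:M.
Proof.
move=> hd hab; rewrite W_adj /Wmx mulmxDl !mulmxDr -!scalemxAl -!scalemxAr !mul1mx !mulmx1.
rewrite K_sq // !scalerA.
have h1 : (a%:C)%C * (a%:C)%C + Complex 0 (-b) * Complex 0 b = 1.
  simpc; apply/eqP; rewrite eq_complex /=; apply/andP; split; apply/eqP; nra.
have h2 : (a%:C)%C * Complex 0 b + Complex 0 (-b) * (a%:C)%C = 0.
  simpc; apply/eqP; rewrite eq_complex /=; apply/andP; split; apply/eqP; nra.
move: (Kmx d) => K; apply/matrixP=> i j; rewrite !mxE.
transitivity (((a%:C)%C * (a%:C)%C + Complex 0 (-b) * Complex 0 b) * (1%:M : 'M[C]_d) i j +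
  ((a%:C)%C * Complex 0 b + Complex 0 (-b) * (a%:C)%C) * K i j).
  rewrite !mxE; ring.
by rewrite h1 h2 mul1r mul0r addr0 mxE.
Qed.

Lemma W_sum d a b : Wmx d a b + adjmx (Wmx d a b) = ((2 * a)%:C)%C *: 1%:M.
Proof.
rewrite W_adj /Wmx; move: (Kmx d) => K; apply/matrixP=> i j; rewrite !mxE.
move: (K i j) => [x y]; case: (_ == _) => /=; simpc; apply/eqP; rewrite eq_complex /=;
  apply/andP; split; apply/eqP; ring.
Qed.


Lemma oracle_facts d a b o : (1 < d)%N -> a ^+ 2 + b ^+ 2 = 1 -> 0 <= a <= 1 ->
  let O := oracle_mx 1%:M (Wmx d a b) o in
  adjmx O *m O = 1%:M /\ exists go, 0 <= go <= 2 - 2 * a /\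
     adjmx (O - 1%:M) *m (O - 1%:M) = (go%:C)%C *: 1%:M.
Proof.
move=> hd hab /andP[ha0 ha1]; cbv zeta.
have hWu := W_unit hd hab.
have hWu' : adjmx (adjmx (Wmx d a b)) *m adjmx (Wmx d a b) = 1%:M.
  by rewrite adjmxK; apply: mulmx1C.
have one : adjmx (1%:M : 'M[C]_d) *m 1%:M = 1%:M by rewrite adjmx1 mulmx1.
have gone : exists go, 0 <= go <= 2 - 2 * a /\
     adjmx ((1%:M : 'M[C]_d) - 1%:M) *m (1%:M - 1%:M) = (go%:C)%C *: 1%:M.
  exists 0; split; first by apply/andP; split => //; lra.
  by rewrite subrr mulmx0 scale0r.
have gW : forall X : 'M[C]_d, X + adjmx X = ((2 * a)%:C)%C *: 1%:M ->
    1%:M + 1%:M - (X + adjmx X) = (((2 - 2 * a))%:C)%C *: 1%:M.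
  move=> X ->; apply/matrixP=> i j; rewrite !mxE.
  case: (_ == _) => /=; simpc; apply/eqP; rewrite eq_complex /=;
    apply/andP; split; apply/eqP; ring.
have gWex : exists go, 0 <= go <= 2 - 2 * a /\ ((2 - 2 * a)%:C)%C *: (1%:M : 'M[C]_d) = (go%:C)%C *: 1%:M.
  by exists (2 - 2 * a); split => //; apply/andP; split => //; lra.
case: o => /=.
- by split; [exact: one | exact: gone].
- by rewrite adjmx1; split; [exact: one | exact: gone].
- split; first exact: hWu.
  rewrite E_sq // gW; first exact: gWex. exact: W_sum.
- split; first exact: hWu'.
  rewrite E_sq // gW; first exact: gWex. by rewrite adjmxK addrC; exact: W_sum.
Qed.

Lemma nrm2_ket0 N : nrm2 (ket0 R N) <= 1.
Proof.
rewrite nrm2E; case: N => [|N]; first by rewrite big_ord0.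
rewrite big_ord_recl big1 ?addr0.
  by rewrite !mxE /= /abs2 /= expr1n expr0n /= addr0.
move=> i _; rewrite !mxE.
rewrite (_ : (\val (lift ord0 i) == 0%N) = false); last first.
  by apply/negbTE; rewrite -[\val _]/(nat_of_ord (lift ord0 i)) lift0.
by rewrite /abs2 /= expr0n /= addr0.
Qed.

Lemma queryA d k q : query_mx k (1%:M : 'M[C]_d) 1%:M q = 1%:M.
Proof.
rewrite query_dec.
have -> : oracle_mx (1%:M : 'M[C]_d) 1%:M q.2 - 1%:M = 0.
  by case: q.2 => /=; rewrite ?adjmx1 subrr.
by rewrite tensmx0 tens0mx addr0.
Qed.

Lemma hybrid d k (Us : nat -> 'M[C]_(2 * d * k)) qs T a b :
  (1 < d)%N -> a ^+ 2 + b ^+ 2 = 1 -> 0 <= a <= 1 ->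
  (forall t, (t <= T)%N -> unitary (Us t)) ->
  forall t, (t <= T)%N ->
    nrm2 (run_state Us qs 1%:M (Wmx d a b) t) <= 1 /\
    nrm (run_state Us qs 1%:M 1%:M t - run_state Us qs 1%:M (Wmx d a b) t)
      <= t%:R * Num.sqrt (2 - 2 * a).
Proof.
move=> hd hab ha hU; elim => [|t IH] hT.
  rewrite /= subrr /nrm /nrm2 adjmxM -mulmxA (mulmxA (adjmx (Us 0%N))) (unitary_iso (hU 0%N hT)).
  rewrite mul1mx -/(nrm2 _) nrm2_ket0; split => //.
  by rewrite mulmx0 mxE /= sqrtr0 mul0r.
have [IH1 IH2] := IH (ltnW hT).
have hUt := unitary_iso (hU t.+1 hT).
rewrite /= queryA mul1mx.
move: (run_state Us qs 1%:M 1%:M t) (run_state Us qs 1%:M (Wmx d a b) t) IH1 IH2 => vA vB IH1 IH2.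
have [hOu [go [hgo hE]]] := oracle_facts (qs t).2 hd hab ha.
have hQ := query_unit k (Pc_proj (qs t).1) (E_unit hOu).
rewrite query_dec.
split; first by rewrite nrm2_iso // nrm2_iso.
rewrite -mulmxBr nrm_iso // mulmxDl mul1mx opprD addrA.
apply: le_trans (nrmB _ _) _.
have hnB : nrm vB <= 1 by rewrite /nrm -sqrtr1 ler_wsqrtr.
have := query_nrm vB (Pc_proj (qs t).1) (proj1 (andP hgo)) hE.
have : Num.sqrt go <= Num.sqrt (2 - 2 * a) by apply: ler_wsqrtr; case/andP: hgo.
have := sqrtr_ge0 go; have := nrm_ge0 vB.
move=> h1 h2 h3 h4; move: h3 IH2; set s := Num.sqrt (2 - 2 * a) => h3 IH2.
rewrite -natr1 mulrDl mul1r; nra.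
Qed.


Lemma inner1 d (M : 'M[C]_d) (i0 : 'I_d) : val i0 = 0%N -> inner_prod 1%:M M = M i0 i0.
Proof.
move=> h0; rewrite /inner_prod mul1mx !mxE (bigD1 i0) //= big1.
  have h1 : (1 -i* 0)%C = 1 :> C by rewrite oppr0.
  rewrite addr0 !mxE h0 eqxx /= h1 mul1r (bigD1 i0) //= big1.
    by rewrite addr0 !mxE h0 eqxx /= mulr1.
  move=> j hj; rewrite !mxE.
  case: eqP => [hj0|]; last by rewrite mulr0.
  by exfalso; move/negP: hj; apply; apply/eqP/val_inj; rewrite /= hj0 h0.
move=> j hj; rewrite !mxE.
case: eqP => [hj0|]; last by rewrite rmorph0 mul0r.
by exfalso; move/negP: hj; apply; apply/eqP/val_inj; rewrite /= hj0 h0.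
Qed.

Lemma nrm_diff N (x y : 'cV[C]_N) : nrm x - nrm y <= nrm (x - y).
Proof.
have := nrmD (x - y) y; rewrite subrK; lra.
Qed.

Lemma mask_disj N (PA PB : pred 'I_N) (v : 'cV[C]_N) :
  (forall x, PA x -> PB x -> False) ->
  nrm2 (mask PA v) + nrm2 (mask PB v) <= nrm2 v.
Proof.
move=> hd; rewrite !nrm2_mask big_mkcond [X in _ + X]big_mkcond -big_split nrm2E.
apply: ler_sum => i _.
have h0 : 0 <= abs2 (v i 0) by rewrite /abs2 addr_ge0 ?sqr_ge0.
case hA: (PA i); case hB: (PB i) => /=.
- by exfalso; apply: (hd i).
- by rewrite addr0.
- by rewrite add0r.
- by rewrite addr0.
Qed.

Lemma core d k (Us : nat -> 'M[C]_(2 * d * k)) qs (f : 'I_(2 * d * k) -> R) T (eps b : R) :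
  (1 < d)%N -> 0 < b <= 1 -> 2 * eps < b ->
  (forall t, (t <= T)%N -> unitary (Us t)) ->
  (forall Uphi Upsi : 'M[C]_d, unitary Uphi -> unitary Upsi ->
       2 / 3 <= success_prob Us qs f T eps Uphi Upsi) ->
  1 <= 10 * T%:R * b.
Proof.
move=> hd /andP[hb0 hb1] hbe hU hS.
have hd0 : (0 < d)%N by apply: ltnW.
pose i0 : 'I_d := Ordinal hd0.
pose a := Num.sqrt (1 - b ^+ 2).
have hb2 : 0 <= 1 - b ^+ 2 by nra.
have ha2 : a ^+ 2 = 1 - b ^+ 2 by rewrite sqr_sqrtr.
have ha0 : 0 <= a by apply: sqrtr_ge0.
clearbody a.
have hab : a ^+ 2 + b ^+ 2 = 1 by rewrite ha2; ring.
have ha1 : a <= 1 by nra.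
have ha : 0 <= a <= 1 by apply/andP.
have uW : unitary (Wmx d a b) by apply: mulmx1C; apply: W_unit.
have u1 : unitary (1%:M : 'M[C]_d) by rewrite /unitary adjmx1 mulmx1.
have TA : trace_dist_pure (1%:M : 'M[C]_d) 1%:M = 0.
  rewrite /trace_dist_pure (inner1 _ (i0 := i0)) // mxE eqxx /abs2 /=.
  by rewrite expr1n expr0n /= addr0 subrr sqrtr0.
have TB : trace_dist_pure 1%:M (Wmx d a b) = b.
  rewrite /trace_dist_pure (inner1 _ (i0 := i0)) //.
  move: (K00 (i0 := i0) erefl); rewrite /Wmx; move: (Kmx d) => K hK.
  rewrite !mxE hK eqxx mulr0 addr0 mulr1n mulr1.
  have -> : abs2 ((a%:C)%C) = a ^+ 2.
    by rewrite /abs2; change (a ^+ 2 + 0 ^+ 2 = a ^+ 2); rewrite expr0n addr0.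
  rewrite ha2.
  by rewrite opprB addrC subrK sqrtr_sqr ger0_norm // ltW.
have hA := hS _ _ u1 u1.
have hB := hS _ _ u1 uW.
rewrite /success_prob TA in hA; rewrite /success_prob TB in hB.
set PA := (fun x => `|f x - 0| <= eps).
set PB := (fun x => `|f x - b| <= eps).
rewrite -(nrm2_mask PA) in hA; rewrite -(nrm2_mask PB) in hB.
have [hvB hdiff] := hybrid qs hd hab ha hU (leqnn T).
move: hA hB hvB hdiff.
move: (run_state Us qs 1%:M 1%:M T) (run_state Us qs 1%:M (Wmx d a b) T) => vA vB hA hB hvB hdiff.
have hdisj := mask_disj vB (PA := PA) (PB := PB).
have : nrm2 (mask PA vB) + nrm2 (mask PB vB) <= nrm2 vB.
  apply: hdisj => x; rewrite /PA /PB subr0 !ler_norml => /andP[h1 h2] /andP[h3 h4]; lra.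
move=> hsum.
have hq : nrm2 (mask PA vB) <= 1 / 3 by lra.
have hx : 4 / 5 <= nrm (mask PA vA).
  rewrite /nrm -(ger0_norm (_ : 0 <= 4 / 5)) -?sqrtr_sqr ?ler_wsqrtr //; lra.
have hy : nrm (mask PA vB) <= 3 / 5.
  rewrite /nrm -(ger0_norm (_ : 0 <= 3 / 5)) -?sqrtr_sqr ?ler_wsqrtr //; lra.
have hm : nrm (mask PA vA) - nrm (mask PA vB) <= nrm (vA - vB).
  apply: le_trans (nrm_diff _ _) _; rewrite -maskB; exact: nrm_mask_le.
have hs : Num.sqrt (2 - 2 * a) <= 2 * b.
  rewrite -(ger0_norm (_ : 0 <= 2 * b)) -?sqrtr_sqr ?ler_wsqrtr //; [nra | lra].
have hT0 : 0 <= T%:R :> R by apply: ler0n.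
have := sqrtr_ge0 (2 - 2 * a); nra.
Qed.

End S.

Theorem theorem5p2 (R : realType) :
  exists c : R, 0 < c /\
  forall (n : nat) (eps : R), (0 < n)%N -> 0 < eps -> eps < 1 / 2 ->
  forall (k T : nat) (Us : nat -> 'M[R[i]]_(2 * 2 ^ n * k))
         (qs : nat -> bool * oracle_kind) (f : 'I_(2 * 2 ^ n * k) -> R),
    (forall t, (t <= T)%N -> unitary (Us t)) ->
    (forall Uphi Upsi : 'M[R[i]]_(2 ^ n), unitary Uphi -> unitary Upsi ->
       2 / 3 <= success_prob Us qs f T eps Uphi Upsi) ->
    c / eps <= T%:R.
Proof.
exists (1 / 30); split; first by lra.
move=> n eps hn he0 he1 k T Us qs f hU hS.
have hd : (1 < 2 ^ n)%N by rewrite -[1%N]/(2 ^ 0)%N ltn_exp2l.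
have hT0 : 0 <= T%:R :> R by apply: ler0n.
rewrite ler_pdivrMr //.
have [he3|he3] := ltP eps (1 / 3).
  have := core hd (b := 3 * eps) _ _ hU hS.
  move=> H; have {}H := H ltac:(apply/andP; split; lra) ltac:(lra); nra.
have := core hd (b := 1) _ _ hU hS.
move=> H; have {}H := H ltac:(apply/andP; split; lra) ltac:(lra); nra.
Qed.
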